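(* For all $m\geq 1$ and $n\in\mathbb N$, \[ s_{n,m}(122,123)=\frac{1}{mn+1}\binom{(m+1)n}{n}. \]
   Context: $[n]_m=\{1^m,\ldots,n^m\}$; a permutation of $[n]_m$ is a sequence of length $nm$ in which each element of $[n]$ appears exactly $m$ times (for $n=0$ only the empty sequence). A sequence avoids a pattern $\pi$ if it has no subsequence order-isomorphic to $\pi$ (same relative order and same equalities among entries). $s_{n,m}(\Pi)$ is the number of permutations of $[n]_m$ avoiding all patterns in $\Pi$. *)

(* Defs.v *)
From mathcomp Require Import all_boot.
Set Implicit Arguments. Unset Strict Implicit. Unset Printing Implicit Defensive.

Definition order_iso (w p : seq nat) : bool :=
  (size w == size p) &&
  [forall i : 'I_(size p), forall j : 'I_(size p),
     ((nth 0 w i < nth 0 w j) == (nth 0 p i < nth 0 p j)) &&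
     ((nth 0 w i == nth 0 w j) == (nth 0 p i == nth 0 p j))].

Definition contains (s p : seq nat) : bool :=
  [exists b : (size s).-tuple bool, order_iso (mask b s) p].

Definition avoids_all (Pi : seq (seq nat)) (s : seq nat) : bool :=
  all (fun p => ~~ contains s p) Pi.

(* [s] is a permutation of the multiset [n]_m = {1^m, ..., n^m}. *)
Definition is_multiperm (n m : nat) (s : seq nat) : bool :=
  (size s == n * m) && all (fun x => 0 < x <= n) s &&
  all (fun i => count_mem i s == m) (iota 1 n).

(* s_{n,m}(Pi): every permutation of [n]_m is the image of a unique
   (n*m)-tuple over 'I_n under i |-> i+1; we count those tuples. *)
Definition s_nm (n m : nat) (Pi : seq (seq nat)) : nat :=
  #|[set t : (n * m).-tuple 'I_n |
      let s := [seq (val i).+1 | i <- t] in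
      is_multiperm n m s && avoids_all Pi s]|.

(* Main.v *)
Require Import Defs.
From mathcomp Require Import all_boot.
From mathcomp Require Import zify.
Set Implicit Arguments. Unset Strict Implicit. Unset Printing Implicit Defensive.

Definition lab (m p t : nat) := if t == 0 then m + p else m.-1 + t.
Fixpoint G (m k p : nat) {struct k} : nat :=
  match k with 0 => 1 | k'.+1 => \sum_(t <- iota 0 p.+1) G m k' (lab m p t) end.

Lemma G_sum m k p : 0 < m -> G m k.+1 p = \sum_(j <- iota 0 p.+1) G m k (m + j).
Proof.
move=> hm.
have -> : iota 0 p.+1 = iota 0 p ++ [:: p] by rewrite -addn1 iotaD.
rewrite [in RHS]big_cat /= big_seq1.
idtac.
rewrite big_cons /lab /= addnC; congr (_ + _).
rewrite -(addn0 1) iotaDl big_map; apply: eq_bigr => j _.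
congr (G m k _); lia.
Qed.

Lemma bin_key m k : 'C(k.+1 * m.+1 + m, k.+2) = m * 'C(k.+1 * m.+1 + m, k.+1).
Proof.
have := mul_bin_left (k.+1 * m.+1 + m) k.+1.
have -> : k.+1 * m.+1 + m - k.+1 = k.+2 * m by rewrite !mulSn mulnS; lia.
rewrite -mulnA => /eqP; rewrite eqn_mul2l /= => /eqP; exact.
Qed.

Lemma G_closed m k p : 0 < m ->
  G m k.+1 p + m * 'C(k.+1 * m.+1 + p, k) = 'C(k.+1 * m.+1 + p, k.+1).
Proof.
move=> hm; elim: k p => [|k IH] p.
  rewrite G_sum // bin0 bin1 muln1 mul1n /= sum1_size /= size_iota; lia.
elim: p => [|p IHp].
  rewrite G_sum // big_cons big_nil !addn0.
  have := IH m.
  set Y := k.+1 * m.+1 + m.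
  have -> : k.+2 * m.+1 = Y.+1 by rewrite /Y mulSn; lia.
  rewrite (binS Y k.+1) (binS Y k) bin_key -/Y mulnDr; lia.
have -> : G m k.+2 p.+1 = G m k.+2 p + G m k.+1 (m + p.+1).
  rewrite (G_sum k.+1 p.+1 hm) (G_sum k.+1 p hm).
  have -> : iota 0 p.+2 = iota 0 p.+1 ++ [:: p.+1] by rewrite -addn1 iotaD.
  by rewrite big_cat big_seq1.
have := IH (m + p.+1).
have -> : k.+1 * m.+1 + (m + p.+1) = k.+2 * m.+1 + p by rewrite (mulSn k.+1); lia.
have -> : k.+2 * m.+1 + p.+1 = (k.+2 * m.+1 + p).+1 by lia.
move: IHp; set Z := k.+2 * m.+1 + p.
rewrite (binS Z k.+1) (binS Z k) mulnDr; lia.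
Qed.

Lemma G_final m n : 0 < m -> (m * n + 1) * G m n 0 = 'C((m + 1) * n, n).
Proof.
move=> hm; case: n => [|k]; first by rewrite muln0 /= bin0.
have h1 := G_closed k 0 hm.
have h2 := mul_bin_left (k.+1 * m.+1 + 0) k.
rewrite addn0 in h1 h2.
have -> : (m + 1) * k.+1 = k.+1 * m.+1 by rewrite addn1 mulnC.
have e : k.+1 * m.+1 - k = m * k.+1 + 1 by rewrite mulnC mulnS; lia.
rewrite e in h2.
rewrite -h1 in h2 *.
nia.
Qed.

Fixpoint up2 (x : nat) (s : seq nat) : bool :=
  if s is b :: s' then (x < b) && has (fun c => b <= c) s' || up2 x s' else false.
Fixpoint pat3b (s : seq nat) : bool :=
  if s is x :: s' then up2 x s' || pat3b s' else false.
Fixpoint noasc (s : seq nat) : bool :=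
  if s is x :: s' then all (fun y => y <= x) s' && noasc s' else true.
Fixpoint lpc (x : nat) (s : seq nat) : nat :=
  if s is y :: s' then (if y <= x then (lpc y s').+1 else 0) else 0.
Definition lp0 (s : seq nat) : nat := if s is y :: s' then (lpc y s').+1 else 0.

Lemma up2_le N v : all (fun y => y <= N) v -> up2 N v = false.
Proof.
elim: v => //= b v IH /andP[hb hv]; by rewrite IH // orbF ltnNge hb.
Qed.

Lemma pat3b_nseq k N u : all (fun y => y <= N) u -> pat3b (nseq k N ++ u) = pat3b u.
Proof.
move=> hu; elim: k => //= k ->; rewrite up2_le //.
by rewrite all_cat hu andbT; apply/allP => y /nseqP [-> _].
Qed.

Lemma up2_ins x N u v : x < N -> all (fun y => y < N) (u ++ v) ->
  up2 x (u ++ N :: v) = up2 x (u ++ v) || has (fun b => x < b) u.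
Proof.
move=> hx; elim: u => [|b u IH] /=.
  move=> hv; rewrite orbF hx /=.
  have -> : has (fun c => N <= c) v = false.
    by apply/hasPn => c /(allP hv) /=; rewrite ltnNge.
  by [].
move=> /andP [hb hu]; rewrite IH //.
have -> : has (fun c => b <= c) (u ++ N :: v).
  by rewrite has_cat /= ltnW // orbT.
by case: (x < b); rewrite /= ?orbT // ?orbF.
Qed.

Lemma has_gt_all x u : has (fun b => x < b) u = ~~ all (fun y => y <= x) u.
Proof. by elim: u => //= y u ->; rewrite negb_and ltnNge. Qed.

Lemma pat3b_ins N u v : all (fun y => y < N) (u ++ v) ->
  pat3b (u ++ N :: v) = pat3b (u ++ v) || ~~ noasc u.
Proof.
elim: u => [|x u IH] /=.
  move=> hv; rewrite orbF up2_le //; apply/allP => y /(allP hv) /ltnW //.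
move=> /andP [hx hu]; rewrite up2_ins // IH // has_gt_all negb_and.
by case: (up2 _ _); case: (pat3b _); case: (all _ _); case: (noasc _).
Qed.

Lemma up2_count x y s : x < y -> 1 < count_mem y s -> up2 x s.
Proof.
move=> hxy; elim: s => //= z s IH.
case: eqP => [->|_] /= hc.
  rewrite hxy /=; apply/orP; left; apply/hasP; exists y => //.
  by rewrite -has_pred1 has_count; move: hc; rewrite add1n ltnS.
by rewrite IH ?orbT.
Qed.

Lemma lpc_take x s t : t <= size s ->
  (all (fun y => y <= x) (take t s) && noasc (take t s)) = (t <= lpc x s).
Proof.
elim: s x t => [|y s IH] x [|t] //=.
rewrite ltnS => ht.
case: ifP => hyx /=; last by [].
rewrite ltnS -IH // andbA.
congr (_ && _).
apply/idP/idP => [/andP[_ ->] //|h]; rewrite h andbT.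
by apply/allP => z /(allP h) /leq_trans; apply.
Qed.

Lemma lp0_take s t : t <= size s -> noasc (take t s) = (t <= lp0 s).
Proof.
case: s t => [|y s] [|t] //= ht.
by rewrite ltnS -lpc_take.
Qed.

Lemma lpc_size x s : lpc x s <= size s.
Proof. by elim: s x => //= y s IH x; case: ifP => // _; rewrite ltnS IH. Qed.

Lemma lp0_size s : lp0 s <= size s.
Proof. by case: s => //= y s; rewrite ltnS lpc_size. Qed.

Lemma lp0_lpc x s : all (fun y => y <= x) s -> lp0 s = lpc x s.
Proof. by case: s => //= y s /andP [-> _]. Qed.

Lemma lpc_nseq N k r : lpc N (nseq k N ++ r) = k + lpc N r.
Proof. by elim: k => //= k ->; rewrite leqnn. Qed.

Lemma lpc_ins x z u v : all (fun y => y <= x) u -> noasc u -> x < z ->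
  lpc x (u ++ z :: v) = size u.
Proof.
elim: u x => [|y u IH] x /=.
  by move=> _ _ hxz; rewrite leqNgt hxz.
move=> /andP [hyx hu] /andP [hau hnu] hxz.
by rewrite hyx IH // (leq_ltn_trans hyx).
Qed.

Definition build (n m : nat) (w : seq nat) (t : nat) : seq nat :=
  nseq m.-1 n.+1 ++ take t w ++ n.+1 :: drop t w.
Definition valid n m s := is_multiperm n m s && ~~ pat3b s.

Lemma count_build (a : pred nat) n m w t : 0 < m ->
  count a (build n m w t) = count a w + a n.+1 * m.
Proof.
move=> hm; rewrite /build !count_cat count_nseq /=.
rewrite -[in RHS](cat_take_drop t w) count_cat.
case: (a n.+1) => /=; lia.
Qed.

Lemma all_build (a : pred nat) n m w t : 0 < m ->
  all a (build n m w t) = all a w && a n.+1.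
Proof.
move=> hm; rewrite /build !all_cat all_nseq /=.
rewrite -[in RHS](cat_take_drop t w) all_cat.
by case: (a n.+1); case: (m.-1 == 0); case: (all a (take t w)); case: (all a (drop t w)).
Qed.

Lemma count0_bound n w : all (fun x => 0 < x <= n) w -> count_mem n.+1 w = 0.
Proof.
move=> hw; apply/eqP; rewrite -leqn0 leqNgt -has_count; apply/hasPn => y /(allP hw) /=.
by move=> /andP [_ hy]; apply/eqP => e; move: hy; rewrite e ltnn.
Qed.

Lemma build_valid n m w t : 0 < m -> all (fun x => 0 < x <= n) w -> t <= size w ->
  valid n.+1 m (build n m w t) = valid n m w && (t <= lp0 w).
Proof.
move=> hm hw ht; rewrite /valid /is_multiperm.
have -> : iota 1 n.+1 = iota 1 n ++ [:: n.+1] by rewrite -(addn1 n) iotaD addnC.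
have hw' : all (fun x => 0 < x <= n.+1) w.
  by apply/allP => y /(allP hw) /andP [-> h]; apply: leqW.
rewrite -!count_predT count_build // count_predT mul1n.
rewrite all_build // hw hw' leqnn andbT.
rewrite all_cat /= count_build // count0_bound //.
have -> : (0 + pred1 n.+1 n.+1 * m == m) = true.
  by rewrite add0n /= eqxx /=; apply/eqP; lia.
rewrite ltn0Sn !andbT.
have -> : all (fun i => count_mem i (build n m w t) == m) (iota 1 n)
        = all (fun i => count_mem i w == m) (iota 1 n).
  apply: eq_in_all => i; rewrite mem_iota => /andP [_ hi].
  rewrite count_build // /=.
  have -> : (n.+1 == i) = false by apply/negbTE; rewrite neq_ltn; apply/orP; right; lia.
  by rewrite mul0n addn0.
have -> : (size w + m == n.+1 * m) = (size w == n * m) by rewrite mulSn addnC eqn_add2l.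
have hle : all (fun y => y <= n.+1) (take t w ++ n.+1 :: drop t w).
  rewrite all_cat /= leqnn -all_cat cat_take_drop.
  by apply/allP => y /(allP hw) /andP [_ h]; apply: leqW.
rewrite /build pat3b_nseq // pat3b_ins; last first.
  by rewrite cat_take_drop; apply/allP => y /(allP hw) /andP [_ h].
rewrite cat_take_drop lp0_take //.
by case: (size w == n * m); case: (all _ _); case: (pat3b w); case: (t <= lp0 w).
Qed.

Lemma nseq_split N (s : seq nat) : exists k r, s = nseq k N ++ r /\
  (r = [::] \/ exists x r', r = x :: r' /\ x != N).
Proof.
elim: s => [|x s [k [r [-> hr]]]]; first by exists 0, [::]; split => //; left.
case: (eqVneq x N) => [->|hx].
  by exists k.+1, r.
by exists 0, (x :: nseq k N ++ r); split => //; right; exists x, (nseq k N ++ r).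
Qed.

Lemma cat_nseq_cons a (x : nat) r : nseq a x ++ x :: r = nseq a.+1 x ++ r.
Proof. by elim: a => //= a ->. Qed.

Lemma bound_noN n u : all (fun y => 0 < y <= n.+1) u -> count_mem n.+1 u = 0 ->
  all (fun y => 0 < y <= n) u.
Proof.
elim: u => //= y u IH /andP [/andP [hy0 hy] hu].
case: eqP => [->|hne] /=; first by [].
move=> hc; rewrite hy0 IH //= andbT.
by rewrite -ltnS ltn_neqAle hy andbT; apply/eqP => e; apply: hne.
Qed.

Lemma valid_decomp n m s : 0 < m -> valid n.+1 m s ->
  exists w t, [/\ all (fun x => 0 < x <= n) w, t <= size w & s = build n m w t].
Proof.
move=> hm; rewrite /valid /is_multiperm => /andP [/andP [/andP [hsz hall] hcnt] hpat].
have hN : count_mem n.+1 s == m.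
  by apply: (allP hcnt); rewrite mem_iota; apply/andP; split => //; lia.
have [k [r [es hr]]] := nseq_split n.+1 s.
subst s.
move: hN; rewrite count_cat count_nseq /= eqxx mul1n => /eqP hN.
case: hr => [er|[x [r' [er hx]]]].
  subst r; move: hsz; rewrite cats0 size_nseq => /eqP hsz.
  rewrite /= addn0 in hN; subst m.
  have n0 : n = 0 by move: hsz; rewrite mulSn; nia.
  subst n; exists [::], 0; split => //.
  by rewrite /build /= cat_nseq_cons prednK // cats0.
subst r.
have hallr : all (fun y => y <= n.+1) (x :: r').
  by apply/allP => y hy; have := allP hall y; rewrite mem_cat hy orbT => /(_ isT) /andP [_ ->].
have hxN : x < n.+1.
  by rewrite ltn_neqAle hx; move: hallr => /= /andP [].
have hc1 : count_mem n.+1 r' <= 1.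
  rewrite leqNgt; apply/negP => hc2; move: hpat; rewrite pat3b_nseq //=.
  by rewrite (up2_count hxN hc2).
move: hN; rewrite /= (negbTE hx) add0n => hN.
have hall' : all (fun y => 0 < y <= n.+1) (x :: r').
  by apply/allP => y hy; apply: (allP hall); rewrite mem_cat hy orbT.
move: hc1; rewrite leq_eqVlt => /orP [/eqP c1|]; last first.
  rewrite ltnS leqn0 => /eqP c0.
  rewrite c0 addn0 in hN; subst m.
  exists (x :: r'), 0; split => //.
    by apply: bound_noN => //=; rewrite (negbTE hx) c0.
  by rewrite /build /= cat_nseq_cons prednK.
have hin : n.+1 \in r' by rewrite -has_pred1 has_count c1.
move: c1 hall' hN; case/splitPr: hin => u v.
rewrite !count_cat /= eqxx /= => c1 hall' hN.
move: (c1) => /eqP; rewrite addnCA add1n eqSS addn_eq0 => /andP [/eqP cu /eqP cv].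
rewrite c1 in hN.
have -> : k = m.-1 by lia.
exists (x :: u ++ v), (size u).+1; split.
- apply: bound_noN.
    by move: hall'; rewrite /= !all_cat /= => /andP [-> /andP [-> /andP [_ ->]]].
  by rewrite /= (negbTE hx) count_cat cu cv.
- by rewrite /= size_cat; lia.
- by rewrite /build /= take_size_cat // drop_size_cat.
Qed.

Fixpoint L (m n : nat) : seq (seq nat) :=
  if n is n'.+1 then [seq build n' m w t | w <- L m n', t <- iota 0 (lp0 w).+1]
  else [:: [::]].

Lemma valid_bound n m s : valid n m s -> all (fun x => 0 < x <= n) s.
Proof. by rewrite /valid /is_multiperm => /andP [/andP [/andP [_ ->] _] _]. Qed.

Lemma L_mem m n s : 0 < m -> (s \in L m n) = valid n m s.
Proof.
move=> hm; elim: n s => [|n IH] s.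
  rewrite /= inE /valid /is_multiperm /=; case: s => [|x s] //=.
apply/allpairsPdep/idP => [[w [t [hw ht ->]]]|hv].
  rewrite IH in hw; rewrite mem_iota /= add0n ltnS in ht.
  rewrite build_valid //; first by apply/andP; split.
    exact: (valid_bound hw).
  exact: (leq_trans ht (lp0_size w)).
have [w [t [hb ht es]]] := valid_decomp hm hv.
move: hv; rewrite es build_valid // => /andP [hw htl].
by exists w, t; rewrite IH mem_iota add0n ltnS hw htl.
Qed.

Lemma notin_bound n (w : seq nat) : all (fun x => x <= n) w -> n.+1 \notin w.
Proof. by move=> h; apply/negP => /(allP h); rewrite ltnn. Qed.

Lemma index_ins (N : nat) (u v : seq nat) : N \notin u -> index N (u ++ N :: v) = size u.
Proof. by move=> h; rewrite index_cat (negbTE h) /= eqxx addn0. Qed.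

Lemma build_inj n m (w1 w2 : seq nat) t1 t2 : all (fun x => x <= n) w1 -> all (fun x => x <= n) w2 ->
  t1 <= size w1 -> t2 <= size w2 -> build n m w1 t1 = build n m w2 t2 -> w1 = w2 /\ t1 = t2.
Proof.
move=> h1 h2 s1 s2; rewrite /build => /eqP; rewrite eqseq_cat // => /andP [_ /eqP e].
have et : t1 = t2.
  have := congr1 (index n.+1) e.
  rewrite !index_ins ?size_takel //.
    by apply/negP => /mem_take; apply/negP; apply: notin_bound.
  by apply/negP => /mem_take; apply/negP; apply: notin_bound.
subst t2; split => //.
move/eqP: e; rewrite eqseq_cat ?size_takel // => /andP [/eqP ea /eqP eb].
by case: eb => eb; rewrite -(cat_take_drop t1 w1) ea eb cat_take_drop.
Qed.

Lemma L_bound m n (w : seq nat) : 0 < m -> w \in L m n -> all (fun x => x <= n) w.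
Proof.
move=> hm; rewrite L_mem // => /valid_bound h.
by apply/allP => y /(allP h) /andP [].
Qed.

Lemma L_uniq m n : 0 < m -> uniq (L m n).
Proof.
move=> hm; elim: n => [|n IH]; first by [].
change (uniq [seq build n m w t | w <- L m n, t <- iota 0 (lp0 w).+1]).
apply: (@allpairs_uniq_dep _ (fun _ => nat) _ (build n m)) => //.
  by move=> w _; apply: iota_uniq.
move=> [w1 t1] [w2 t2] /allpairsPdep [x1 [y1 [hx1 hy1 e1]]]
  /allpairsPdep [x2 [y2 [hx2 hy2 e2]]] /= e.
have ew1 := congr1 tag e1; have et1 := congr1 (@tagged _ (fun _ => nat)) e1.
have ew2 := congr1 tag e2; have et2 := congr1 (@tagged _ (fun _ => nat)) e2.
simpl in ew1, et1, ew2, et2; subst.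
rewrite !mem_iota /= !add0n !ltnS in hy1 hy2.
have [-> ->] := build_inj (L_bound hm hx1) (L_bound hm hx2)
  (leq_trans hy1 (lp0_size _)) (leq_trans hy2 (lp0_size _)) e.
by [].
Qed.

Lemma lp0_build n m (w : seq nat) t : 0 < m -> all (fun x => x <= n) w -> t <= lp0 w ->
  lp0 (build n m w t) = lab m (lp0 w) t.
Proof.
move=> hm hw ht.
have hall : all (fun x => x <= n.+1) (build n m w t).
  rewrite all_build // leqnn andbT.
  by apply/allP => y /(allP hw) /leqW.
have hw' : all (fun x => x <= n.+1) w by apply/allP => y /(allP hw) /leqW.
rewrite (lp0_lpc hall) /build lpc_nseq /lab; clear hall.
case: t ht => [|t] ht /=.
  rewrite take0 drop0 /= leqnn -(lp0_lpc hw'); lia.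
case: w hw hw' ht => [|y w'] //= /andP [hy hw] /andP [hy' hw'] ht.
rewrite ltnS in ht.
rewrite hy' lpc_ins //.
- rewrite size_takel; first lia.
  exact: leq_trans ht (lpc_size _ _).
- have hts : t <= size w' by exact: leq_trans ht (lpc_size _ _).
  by have := lpc_take y hts; rewrite ht => /andP [].
- have hts : t <= size w' by exact: leq_trans ht (lpc_size _ _).
  by have := lpc_take y hts; rewrite ht => /andP [].
Qed.

Lemma sumG m k n : 0 < m ->
  \sum_(w <- L m n) G m k (lp0 w) = size (L m (k + n)).
Proof.
move=> hm; elim: k n => [|k IH] n.
  by rewrite add0n /= sum1_size.
rewrite addSnnS -IH.
change (L m n.+1) with [seq build n m w t | w <- L m n, t <- iota 0 (lp0 w).+1].
rewrite big_allpairs_dep /=.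
apply: eq_big_seq => w hw.
apply: eq_big_seq => t ht.
have {ht} ht : t <= lp0 w by move: ht; rewrite -[0 :: iota 1 _]/(iota 0 (lp0 w).+1) mem_iota add0n ltnS.
by rewrite lp0_build // (L_bound hm hw).
Qed.

Lemma size_L m n : 0 < m -> size (L m n) = G m n 0.
Proof.
move=> hm; have := sumG n 0 hm; rewrite addn0 /= => <-.
by rewrite big_seq1.
Qed.

Lemma containsP s p : reflect (exists2 w, subseq w s & order_iso w p) (contains s p).
Proof.
apply: (iffP existsP) => [[b hb]|[w hw hiso]].
  by exists (mask b s) => //; apply: mask_subseq.
case/subseqP: hw => mk hsz e.
by exists (@Tuple (size s) bool mk (introT eqP hsz)); rewrite /= -e.
Qed.

Lemma up2P x s : reflect (exists b c, [/\ x < b, b <= c & subseq [:: b; c] s]) (up2 x s).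
Proof.
elim: s => [|y s IH] /=; first by constructor => [[b [c [_ _]]]].
apply: (iffP orP) => [[/andP [hxy /hasP [c hc hyc]] | /IH [b [c [h1 h2 h3]]]] | [b [c [h1 h2]]]].
- by exists y, c; split => //=; rewrite eqxx sub1seq.
- exists b, c; split => //; exact: subseq_trans h3 (subseq_cons s y).
- rewrite /=; case: eqP => [<-|_] h3.
    by left; rewrite h1 /=; apply/hasP; exists c => //; rewrite -sub1seq.
  by right; apply/IH; exists b, c.
Qed.

Lemma pat3bP s : reflect (exists a b c, [/\ a < b, b <= c & subseq [:: a; b; c] s]) (pat3b s).
Proof.
elim: s => [|y s IH] /=; first by constructor => [[a [b [c [_ _]]]]].
apply: (iffP orP) => [[/up2P [b [c [h1 h2 h3]]] | /IH [a [b [c [h1 h2 h3]]]]] | [a [b [c [h1 h2]]]]].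
- by exists y, b, c; split => //=; rewrite eqxx.
- exists a, b, c; split => //; exact: subseq_trans h3 (subseq_cons s y).
- rewrite /=; case: eqP => [<-|_] h3.
    by left; apply/up2P; exists b, c.
  by right; apply/IH; exists a, b, c.
Qed.

Lemma iso3 w p0 p1 p2 : order_iso w [:: p0; p1; p2] ->
  exists a b c, [/\ w = [:: a; b; c], (a < b) = (p0 < p1), (b < c) = (p1 < p2)
                  & (b == c) = (p1 == p2)].
Proof.
case/andP => hs /forallP h.
case: w hs h => [|a [|b [|c [|d w]]]] //= _ h.
exists a, b, c; split => //.
- by have := h (@Ordinal 3 0 isT) => /forallP /(_ (@Ordinal 3 1 isT)) /andP [/eqP -> _].
- by have := h (@Ordinal 3 1 isT) => /forallP /(_ (@Ordinal 3 2 isT)) /andP [/eqP -> _].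
- by have := h (@Ordinal 3 1 isT) => /forallP /(_ (@Ordinal 3 2 isT)) /andP [_ /eqP ->].
Qed.

Lemma avoids_pat3 s : avoids_all [:: [:: 1; 2; 2]; [:: 1; 2; 3]] s = ~~ pat3b s.
Proof.
rewrite /avoids_all /= andbT -negb_or; congr (~~ _).
apply/idP/idP.
  case/orP => /containsP [w hsub /iso3 [a [b [c [ew h1 h2 h3]]]]]; subst w;
    apply/pat3bP; exists a, b, c; split => //; by rewrite leq_eqVlt h2 h3.
case/pat3bP => a [b [c [hab hbc hsub]]].
have hab' : (b < a) = false by apply/negbTE; rewrite -leqNgt ltnW.
have ha1 : (a == b) = false by apply/negbTE; rewrite neq_ltn hab.
have ha2 : (b == a) = false by apply/negbTE; rewrite neq_ltn hab orbT.
move: hbc; rewrite leq_eqVlt => /orP [/eqP ebc|hbc].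
  subst c; apply/orP; left; apply/containsP; exists [:: a; b; b] => //.
  rewrite /order_iso /=; apply/forallP => i; apply/forallP => j.
  case: i j => [[|[|[|i]]] hi] [[|[|[|j]]] hj] //=;
    by rewrite ?ltnn ?eqxx ?hab ?hab' ?ha1 ?ha2.
have hbc' : (c < b) = false by apply/negbTE; rewrite -leqNgt ltnW.
have hb1 : (b == c) = false by apply/negbTE; rewrite neq_ltn hbc.
have hb2 : (c == b) = false by apply/negbTE; rewrite neq_ltn hbc orbT.
have hac : a < c by exact: ltn_trans hab hbc.
have hac' : (c < a) = false by apply/negbTE; rewrite -leqNgt ltnW.
have hc1 : (a == c) = false by apply/negbTE; rewrite neq_ltn hac.
have hc2 : (c == a) = false by apply/negbTE; rewrite neq_ltn hac orbT.
apply/orP; right; apply/containsP; exists [:: a; b; c] => //.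
rewrite /order_iso /=; apply/forallP => i; apply/forallP => j.
case: i j => [[|[|[|i]]] hi] [[|[|[|j]]] hj] //=;
  by rewrite ?ltnn ?eqxx ?hab ?hab' ?ha1 ?ha2 ?hbc ?hbc' ?hb1 ?hb2 ?hac ?hac' ?hc1 ?hc2.
Qed.

Lemma lift_seq n (s : seq nat) : all (fun x => 0 < x <= n) s ->
  exists u : seq 'I_n, [seq (val i).+1 | i <- u] = s.
Proof.
elim: s => [|x s IH] /=; first by exists [::].
move=> /andP [/andP [h0 h1] /IH [u hu]].
have hx : x.-1 < n by lia.
by exists (Ordinal hx :: u); rewrite /= hu prednK.
Qed.

Lemma s_nm_L n m : 0 < m ->
  s_nm n m [:: [:: 1; 2; 2]; [:: 1; 2; 3]] = size (L m n).
Proof.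
move=> hm; rewrite /s_nm cardE.
set S := [set t : (n * m).-tuple 'I_n | _].
rewrite -(size_map (fun t : (n * m).-tuple 'I_n => [seq (val i).+1 | i <- t])).
apply: perm_size; apply: uniq_perm.
- rewrite map_inj_uniq ?enum_uniq // => t1 t2 /= e.
  apply: val_inj; apply: (inj_map _ e) => i j /= /succn_inj; apply: val_inj.
- exact: L_uniq.
- move=> s; rewrite L_mem //; apply/mapP/idP => [[t ht ->]|hv].
    by move: ht; rewrite mem_enum inE /valid -avoids_pat3 => h; exact: h.
  have [u hu] := lift_seq (valid_bound hv).
  have hsz : size u == n * m.
    move: hv; rewrite /valid /is_multiperm -hu size_map.
    by case/andP => /andP [/andP [-> _] _] _.
  exists (@Tuple (n * m) _ u hsz) => /=; last by rewrite hu.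
  rewrite mem_enum inE hu; move: hv; rewrite /valid -avoids_pat3 => h; exact: h.
Qed.

Unset Implicit Arguments.

Theorem theorem4 (m n : nat) (hm : 1 <= m) :
  (m * n + 1) * s_nm n m [:: [:: 1; 2; 2]; [:: 1; 2; 3]]
  = 'C((m + 1) * n, n).
Proof. by rewrite s_nm_L // size_L // G_final. Qed.
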